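(* Let $q$ be an odd prime power and $\varphi_3$ the coloring defined below (with $d=3$). No set $S\subseteq(\mathbb{F}_q^* )^3$ of $6$ vectors has a leftover structure under $\varphi_3$.
   Context: Let $d=3$. $\mathbb{F}_q^*$ is the set of nonzero elements of $\mathbb{F}_q$, endowed with an arbitrary fixed linear order; $(\mathbb{F}_q^* )^d$ is ordered lexicographically with respect to it. Let $C_d = \mathrm{DOT} \sqcup \mathrm{ZERO}\sqcup\mathrm{UP}\sqcup\mathrm{DOWN}$, where $\mathrm{DOT} = \mathbb{F}_q^*$ and ZERO, UP, DOWN are three disjoint copies of $\{1,\dots,d\}\times \mathbb{F}_q$. For distinct $x<y$ in $(\mathbb{F}_q^* )^d$, let $i$ be the first coordinate where $x$ and $y$ differ, and $x\cdot y$ the standard dot product; $\varphi_d(x,y)=\varphi_d(y,x)$ is $(i,x_i+y_i)$ in ZERO if $x\cdot y=0$; $(i,x_i+y_i)$ in UP if $x\cdot y\ne 0$ and $x\cdot y=x\cdot x$; $(i,x_i+y_i)$ in DOWN if $x\cdot y\notin\{0,x\cdot x\}$ and $x\cdot y=y\cdot y$; and $x\cdot y\in\mathrm{DOT}$ otherwise. For a vertex set $A$, $\varphi_d(A)$ is the set of colors on pairs inside $A$. $S$ has a leftover structure under $\varphi_d$ if $|S|=1$, or $S$ has a partition $S=A\cup B$ into nonempty sets such that $A$ and $B$ each have a leftover structure, $\varphi_d(A)\cap\varphi_d(B)=\emptyset$, and there is a color $\gamma$ with $\varphi_d(a,b)=\gamma$ for all $a\in A$, $b\in B$ and $\gamma\notin\varphi_d(A)\cup\varphi_d(B)$.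 *)

(* Defs.v *)
From HB Require Import structures.
From mathcomp Require Import all_boot all_order all_algebra all_field.
Set Implicit Arguments. Unset Strict Implicit. Unset Printing Implicit Defensive.
Import GRing.Theory.
Local Open Scope ring_scope.

Section Coloring.
Variable (F : finFieldType) (d : nat).

Definition vec := {ffun 'I_d -> F}.

Definition nzvec (x : vec) : bool := [forall i, x i != 0].

Definition linear_order_on_units (lt : rel F) : Prop :=
  [/\ (forall a, a != 0 -> ~~ lt a a),
      (forall a b c, a != 0 -> b != 0 -> c != 0 -> lt a b -> lt b c -> lt a c)
    & (forall a b, a != 0 -> b != 0 -> a != b -> lt a b || lt b a)].

Definition first_diff_at (x y : vec) (i : 'I_d) : bool :=
  (x i != y i) && [forall j : 'I_d, (j < i)%N ==> (x j == y j)].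

Definition lexlt (lt : rel F) (x y : vec) : bool :=
  [exists i, first_diff_at x y i && lt (x i) (y i)].

Definition dotp (x y : vec) : F := \sum_(i < d) x i * y i.

Definition color := (F + (('I_d * F) + (('I_d * F) + ('I_d * F))))%type.
Definition DOT (a : F) : color := inl a.
Definition ZERO (p : 'I_d * F) : color := inr (inl p).
Definition UP (p : 'I_d * F) : color := inr (inr (inl p)).
Definition DOWN (p : 'I_d * F) : color := inr (inr (inr p)).

(* color of the pair {x,y} given x < y (i = first differing coordinate) *)
Definition col_ordered (x y : vec) : color :=
  match [pick i | first_diff_at x y i] with
  | None => DOT 0 (* unreachable for x <> y *)
  | Some i =>
      let c := (i, x i + y i) in
      if dotp x y == 0 then ZERO c
      else if dotp x y == dotp x x then UP c
      else if dotp x y == dotp y y then DOWN c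
      else DOT (dotp x y)
  end.

Definition phi (lt : rel F) (x y : vec) : color :=
  if lexlt lt x y then col_ordered x y else col_ordered y x.

Definition phiset (lt : rel F) (A : {set vec}) : {set color} :=
  [set phi lt a b | a in A, b in A & a != b].

Inductive leftover (lt : rel F) : {set vec} -> Prop :=
  | leftover_single (S : {set vec}) : #|S| = 1%N -> leftover lt S
  | leftover_split (A B : {set vec}) (gamma : color) :
      A != set0 -> B != set0 -> [disjoint A & B] ->
      leftover lt A -> leftover lt B ->
      [disjoint phiset lt A & phiset lt B] ->
      (forall a b, a \in A -> b \in B -> phi lt a b = gamma) ->
      gamma \notin phiset lt A :|: phiset lt B ->
      leftover lt (A :|: B).

End Coloring.

(* Main.v *)
Require Import Defs.
From mathcomp Require Import all_boot all_order all_algebra all_field.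
From mathcomp Require Import ring.
Set Implicit Arguments. Unset Strict Implicit. Unset Printing Implicit Defensive.
Import GRing.Theory.
Local Open Scope ring_scope.
Section S.
Variable F : finFieldType.
Definition i0 : 'I_3 := @Ordinal 3 0 isT.
Definition i1 : 'I_3 := @Ordinal 3 1 isT.
Definition i2 : 'I_3 := @Ordinal 3 2 isT.
Lemma ord3_cases (i : 'I_3) : i = i0 \/ i = i1 \/ i = i2.
Proof. case: i => [[|[|[|//]]] Hi]; [left|right;left|right;right]; exact: val_inj. Qed.
Lemma dotE (x y : vec F 3) : dotp x y = x i0 * y i0 + x i1 * y i1 + x i2 * y i2.
Proof.
rewrite /dotp !big_ord_recr big_ord0 /= add0r.
by congr (x _ * y _ + x _ * y _ + x _ * y _); apply: val_inj.
Qed.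
Lemma vec_eq3 (x y : vec F 3) : x i0 = y i0 -> x i1 = y i1 -> x i2 = y i2 -> x = y.
Proof. by move=> h0 h1 h2; apply/ffunP => i; case: (ord3_cases i) => [->|[->|->]]. Qed.
Lemma par3 (v0 v1 v2 w0 w1 w2 : F) : v0*w1 = v1*w0 -> v1*w2 = v2*w1 -> v0*w2 = v2*w0 ->
  (w0 != 0 \/ w1 != 0 \/ w2 != 0) -> exists t, [/\ v0 = t*w0, v1 = t*w1 & v2 = t*w2].
Proof.
move=> h01 h12 h02 [w|[w|w]].
- exists (v0/w0); split; first by rewrite divfK.
  by rewrite mulrAC h01 mulfK. by rewrite mulrAC h02 mulfK.
- exists (v1/w1); split.
  by rewrite mulrAC -h01 mulfK. by rewrite divfK. by rewrite mulrAC h12 mulfK.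
- exists (v2/w2); split.
  by rewrite mulrAC -h02 mulfK. by rewrite mulrAC -h12 mulfK. by rewrite divfK.
Qed.
Notation V := (vec F 3).
Lemma fd_uniq (x y : V) i j : first_diff_at x y i -> first_diff_at x y j -> i = j.
Proof.
case/andP=> hi /forallP fi; case/andP=> hj /forallP fj.
case: (ltngtP i j) => h.
- by move: (implyP (fj i) h); rewrite (negbTE hi).
- by move: (implyP (fi j) h); rewrite (negbTE hj).
- exact: val_inj.
Qed.
Lemma fd_sym (x y : V) i : first_diff_at x y i -> first_diff_at y x i.
Proof.
case/andP=> hi /forallP fi; apply/andP; split; first by rewrite eq_sym.
by apply/forallP=> j; apply/implyP=> h; rewrite eq_sym (implyP (fi j) h).
Qed.
Lemma fd_ex (x y : V) : x != y -> exists i, first_diff_at x y i.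
Proof.
move=> nxy.
case: (eqVneq (x i0) (y i0)) => h0.
  case: (eqVneq (x i1) (y i1)) => h1.
    exists i2; apply/andP; split.
      by apply: contraNneq nxy => h2; apply/eqP; apply: vec_eq3.
    apply/forallP=> j; apply/implyP => hj; case: (ord3_cases j) => [e|[e|e]]; subst j => //.
    by rewrite h0. by rewrite h1.
  exists i1; apply/andP; split => //.
  apply/forallP=> j; apply/implyP => hj; case: (ord3_cases j) => [e|[e|e]]; subst j => //.
  by rewrite h0.
exists i0; apply/andP; split => //.
by apply/forallP=> j; apply/implyP => hj; case: (ord3_cases j) => [e|[e|e]]; subst j.
Qed.
Variable lt : rel F.
Lemma lexltE (x y : V) i : first_diff_at x y i -> lexlt lt x y = lt (x i) (y i).
Proof.
move=> H; apply/existsP/idP => [[j /andP[hj hl]]|hl]; last by exists i; rewrite H.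
by rewrite -(fd_uniq hj H).
Qed.
Lemma col_orderedE (x y : V) i : first_diff_at x y i -> col_ordered x y =
      let c := (i, x i + y i) in
      if dotp x y == 0%R then ZERO c
      else if dotp x y == dotp x x then UP c
      else if dotp x y == dotp y y then DOWN c
      else DOT 3 (dotp x y).
Proof.
move=> H; rewrite /col_ordered; case: pickP => [j hj|h]; last by move: (h i); rewrite H.
by rewrite (fd_uniq hj H).
Qed.
Lemma dotC (x y : V) : dotp x y = dotp y x.
Proof. by rewrite !dotE; ring. Qed.
Lemma phi_DOT (x y : V) c : x != y -> phi lt x y = DOT 3 c ->
  [/\ c = dotp x y, c != 0, c != dotp x x & c != dotp y y].
Proof.
move=> nxy; have [i H] := fd_ex nxy; have H' := fd_sym H.
rewrite /phi; case: ifP => _; [rewrite (col_orderedE H) | rewrite (col_orderedE H')] => /=;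
  rewrite /DOT /ZERO /UP /DOWN ?(dotC y x);
  do !(case: eqP => //=); move=> *; first [congruence | (split; [congruence|done|done|done])].
Qed.
Lemma phi_nonDOT (x y : V) p : x != y ->
  (phi lt x y = ZERO p \/ phi lt x y = UP p \/ phi lt x y = DOWN p) ->
  first_diff_at x y p.1 /\ x p.1 + y p.1 = p.2.
Proof.
move=> nxy; have [i H] := fd_ex nxy; have H' := fd_sym H.
have E : forall q : 'I_3 * F, q = (i, x i + y i) -> first_diff_at x y q.1 /\ x q.1 + y q.1 = q.2
  by move=> q ->.
rewrite /phi; case: ifP => _; [rewrite (col_orderedE H) | rewrite (col_orderedE H')] => /=;
  rewrite /DOT /ZERO /UP /DOWN; do !(case: eqP => _); move=> hh; apply: E;
  case: hh => [e|[e|e]]; rewrite ?(addrC (y i)) in e; by case: e.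
Qed.
Lemma phi_ZERO (x y : V) p : x != y -> phi lt x y = ZERO p -> dotp x y = 0.
Proof.
move=> nxy; have [i H] := fd_ex nxy; have H' := fd_sym H.
rewrite /phi; case: ifP => _; [rewrite (col_orderedE H) | rewrite (col_orderedE H')] => /=;
  rewrite /DOT /ZERO /UP /DOWN ?(dotC y x); do !(case: eqP => ?); move=> *; congruence.
Qed.
Lemma phi_UP (x y : V) p : x != y -> phi lt x y = UP p ->
  dotp x y = if lexlt lt x y then dotp x x else dotp y y.
Proof.
move=> nxy; have [i H] := fd_ex nxy; have H' := fd_sym H.
rewrite /phi; case: (lexlt lt x y); [rewrite (col_orderedE H) | rewrite (col_orderedE H')] => /=;
  rewrite /DOT /ZERO /UP /DOWN ?(dotC y x); do !(case: eqP => ?); move=> *; congruence.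
Qed.
Lemma phi_DOWN (x y : V) p : x != y -> phi lt x y = DOWN p ->
  dotp x y = if lexlt lt x y then dotp y y else dotp x x.
Proof.
move=> nxy; have [i H] := fd_ex nxy; have H' := fd_sym H.
rewrite /phi; case: (lexlt lt x y); [rewrite (col_orderedE H) | rewrite (col_orderedE H')] => /=;
  rewrite /DOT /ZERO /UP /DOWN ?(dotC y x); do !(case: eqP => ?); move=> *; congruence.
Qed.
Hypothesis hlin : linear_order_on_units lt.
Lemma phi_sym (x y : V) : nzvec x -> nzvec y -> x != y -> phi lt x y = phi lt y x.
Proof.
move=> /forallP nx /forallP ny nxy; have [i H] := fd_ex nxy; have H' := fd_sym H.
case: hlin => irr tr tot.
rewrite /phi (lexltE H) (lexltE H').
have ne : x i != y i by case/andP: H.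
case hl: (lt (x i) (y i)); case hl': (lt (y i) (x i)) => //.
- by move: (irr _ (nx i)); rewrite (tr _ _ _ (nx i) (ny i) (nx i) hl hl').
- by move: (tot _ _ (nx i) (ny i) ne); rewrite hl hl'.
Qed.
Definition lin (n0 n1 n2 : F) (x : V) := n0 * x i0 + n1 * x i1 + n2 * x i2.
Definition coll (S : {set V}) := exists w0 w1 w2 : F, forall x y, x \in S -> y \in S ->
  exists t, [/\ x i0 - y i0 = t * w0, x i1 - y i1 = t * w1 & x i2 - y i2 = t * w2].
Definition cop (S : {set V}) := exists n0 n1 n2 : F, (n0 != 0 \/ n1 != 0 \/ n2 != 0) /\
  forall x y, x \in S -> y \in S -> lin n0 n1 n2 x = lin n0 n1 n2 y.
Definition wf (w0 w1 w2 : F) (i : 'I_3) : F := if i == i0 then w0 else if i == i1 then w1 else w2.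
Lemma wfE (x y : V) t w0 w1 w2 :
  [/\ x i0 - y i0 = t * w0, x i1 - y i1 = t * w1 & x i2 - y i2 = t * w2] ->
  forall i, x i - y i = t * wf w0 w1 w2 i.
Proof. by case=> e0 e1 e2 i; case: (ord3_cases i) => [->|[->|->]]. Qed.
Lemma coll2 (S : {set V}) (n0 n1 n2 m0 m1 m2 : F) :
  (n1* m2 - n2* m1 != 0 \/ n2* m0 - n0* m2 != 0 \/ n0* m1 - n1* m0 != 0) ->
  (forall x y, x \in S -> y \in S -> lin n0 n1 n2 x = lin n0 n1 n2 y /\ lin m0 m1 m2 x = lin m0 m1 m2 y) ->
  coll S.
Proof.
move=> hc H; exists (n1* m2 - n2* m1), (n2* m0 - n0* m2), (n0* m1 - n1* m0) => x y hx hy.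
have [en em] := H x y hx hy.
have Z : forall a b : F, a = b -> a - b = 0 by move=> a b ->; rewrite subrr.
have En := Z _ _ en; have Em := Z _ _ em.
apply: par3 => //; apply/eqP; rewrite -subr_eq0; apply/eqP.
- have -> : (x i0 - y i0) * (n2 * m0 - n0 * m2) - (x i1 - y i1) * (n1 * m2 - n2 * m1)
     = n2 * (lin m0 m1 m2 x - lin m0 m1 m2 y) - m2 * (lin n0 n1 n2 x - lin n0 n1 n2 y)
    by rewrite /lin; ring.
  by rewrite En Em !mulr0 subrr.
- have -> : (x i1 - y i1) * (n0 * m1 - n1 * m0) - (x i2 - y i2) * (n2 * m0 - n0 * m2)
     = n0 * (lin m0 m1 m2 x - lin m0 m1 m2 y) - m0 * (lin n0 n1 n2 x - lin n0 n1 n2 y)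
    by rewrite /lin; ring.
  by rewrite En Em !mulr0 subrr.
- have -> : (x i0 - y i0) * (n0 * m1 - n1 * m0) - (x i2 - y i2) * (n1 * m2 - n2 * m1)
     = - (n1 * (lin m0 m1 m2 x - lin m0 m1 m2 y) - m1 * (lin n0 n1 n2 x - lin n0 n1 n2 y))
    by rewrite /lin; ring.
  by rewrite En Em !mulr0 subrr oppr0.
Qed.
Lemma side1 (S : {set V}) x x' y g : coll S -> x \in S -> x' \in S -> y \in S ->
  x != x' -> x != y -> x' != y -> phi lt x y = g -> phi lt x' y = g -> False.
Proof.
move=> [w0 [w1 [w2 cl]]] hx hx' hy nxx nxy nx'y e1 e2.
have [t ht] := cl x x' hx hx'; have [s hs] := cl x y hx hy.
have Ht := wfE ht; have Hs := wfE hs.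
have tn0 : t != 0.
  apply/eqP => t0; apply: (negP nxx); apply/eqP; apply: vec_eq3; apply/eqP; by rewrite -subr_eq0 Ht t0 mul0r.
have ND : forall q : 'I_3 * F, first_diff_at x y q.1 -> x q.1 + y q.1 = q.2 ->
    x' q.1 + y q.1 = q.2 -> False.
  move=> q /andP[nq _] s1 s2.
  have exx : x q.1 = x' q.1 by apply: (addIr (y q.1)); rewrite s1 s2.
  have w0' : wf w0 w1 w2 q.1 = 0.
    by apply/eqP; move: (Ht q.1); rewrite exx subrr => /esym/eqP; rewrite mulf_eq0 (negbTE tn0).
  by move: (Hs q.1); rewrite w0' mulr0 => /eqP; rewrite subr_eq0 (negbTE nq).
case: g e1 e2 => [c|[p|[p|p]]] e1 e2.
- have [c1 _ _ cyy] := phi_DOT nxy e1; have [c2 _ _ _] := phi_DOT nx'y e2.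
  case: ht => a0 a1 a2; case: hs => b0 b1 b2.
  have W1 : dotp x y - dotp x' y = t * lin w0 w1 w2 y.
    rewrite !dotE /lin.
    have -> : x i0 * y i0 + x i1 * y i1 + x i2 * y i2 - (x' i0 * y i0 + x' i1 * y i1 + x' i2 * y i2)
      = (x i0 - x' i0) * y i0 + (x i1 - x' i1) * y i1 + (x i2 - x' i2) * y i2 by ring.
    rewrite a0 a1 a2; ring.
  have W2 : dotp x y - dotp y y = s * lin w0 w1 w2 y.
    rewrite !dotE /lin.
    have -> : x i0 * y i0 + x i1 * y i1 + x i2 * y i2 - (y i0 * y i0 + y i1 * y i1 + y i2 * y i2)
      = (x i0 - y i0) * y i0 + (x i1 - y i1) * y i1 + (x i2 - y i2) * y i2 by ring.
    rewrite b0 b1 b2; ring.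
  have L0 : lin w0 w1 w2 y = 0.
    by apply/eqP; move: W1; rewrite -c1 -c2 subrr => /esym/eqP; rewrite mulf_eq0 (negbTE tn0).
  move: W2; rewrite L0 mulr0 -c1 => /eqP; rewrite subr_eq0 => /eqP cy.
  by rewrite cy eqxx in cyy.
- have [f1 s1] := phi_nonDOT nxy (or_introl e1); have [_ s2] := phi_nonDOT nx'y (or_introl e2).
  exact: ND f1 s1 s2.
- have [f1 s1] := phi_nonDOT nxy (or_intror (or_introl e1));
  have [_ s2] := phi_nonDOT nx'y (or_intror (or_introl e2)).
  exact: ND f1 s1 s2.
- have [f1 s1] := phi_nonDOT nxy (or_intror (or_intror e1));
  have [_ s2] := phi_nonDOT nx'y (or_intror (or_intror e2)).
  exact: ND f1 s1 s2.
Qed.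
Lemma neqAB (A B : {set V}) a b : [disjoint A & B] -> a \in A -> b \in B -> a != b.
Proof. by move=> d ha hb; apply/eqP => e; subst; rewrite (disjointFr d ha) in hb. Qed.
Lemma cardU_disj (A B : {set V}) : [disjoint A & B] -> #|A :|: B| = (#|A| + #|B|)%N.
Proof. by move=> d; rewrite cardsU (disjoint_setI0 d) cards0 subn0. Qed.
Lemma inUl (A B : {set V}) a : a \in A -> a \in A :|: B.
Proof. by move=> h; rewrite in_setU h. Qed.
Lemma inUr (A B : {set V}) a : a \in B -> a \in A :|: B.
Proof. by move=> h; rewrite in_setU h orbT. Qed.
Lemma coll_sub (A B : {set V}) : A \subset B -> coll B -> coll A.
Proof.
move=> /subsetP s [w0 [w1 [w2 h]]]; exists w0, w1, w2 => x y hx hy; exact: h (s _ hx) (s _ hy).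
Qed.
Lemma L1 S : leftover lt S -> (forall x, x \in S -> nzvec x) -> coll S -> (#|S| <= 2)%N.
Proof.
case=> [S0 -> // | A B g nA nB dAB lA lB dphi cr gn] nz cl.
rewrite cardU_disj //.
suff [hA hB] : (#|A| <= 1)%N /\ (#|B| <= 1)%N by apply: (leq_add hA hB).
have [a0 ha0] := set0Pn _ nA; have [b0 hb0] := set0Pn _ nB.
split; rewrite leqNgt; apply/negP => /card_gt1P [x [x' [hx hx' nxx]]].
- apply: (side1 (S := A :|: B) (y := b0) (g := g) cl (inUl _ hx) (inUl _ hx') (inUr _ hb0) nxx).
  + exact: neqAB dAB hx hb0.
  + exact: neqAB dAB hx' hb0.
  + exact: cr.
  + exact: cr.
- have nz0 : nzvec a0 by apply: nz; exact: inUl.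
  have ne := neqAB dAB ha0.
  apply: (side1 (S := A :|: B) (y := a0) (g := g) cl (inUr _ hx) (inUr _ hx') (inUl _ ha0) nxx).
  + by rewrite eq_sym ne.
  + by rewrite eq_sym ne.
  + rewrite (phi_sym (nz _ (inUr _ hx)) nz0); [exact: cr | by rewrite eq_sym ne].
  + rewrite (phi_sym (nz _ (inUr _ hx')) nz0); [exact: cr | by rewrite eq_sym ne].
Qed.
Definition ev (i : 'I_3) (j : 'I_3) : F := if j == i then 1 else 0.
Lemma linev i (x : V) : lin (ev i i0) (ev i i1) (ev i i2) x = x i.
Proof. by rewrite /lin /ev; case: (ord3_cases i) => [->|[->|->]]; rewrite /= ?mul1r ?mul0r ?addr0 ?add0r. Qed.
Lemma coll_nc (X : {set V}) (n0 n1 n2 : F) (i : 'I_3) :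
  (exists j, j != i /\ wf n0 n1 n2 j != 0) ->
  (forall x y, x \in X -> y \in X -> lin n0 n1 n2 x = lin n0 n1 n2 y /\ x i = y i) -> coll X.
Proof.
move=> [j [nji hj]] H; apply: (coll2 (n0 := n0) (n1 := n1) (n2 := n2) (m0 := ev i i0) (m1 := ev i i1) (m2 := ev i i2)).
  move: nji hj; rewrite /wf /ev.
  case: (ord3_cases i) => [->|[->|->]]; case: (ord3_cases j) => [->|[->|->]] //= _ h;
    rewrite ?mulr0 ?mulr1 ?subrr ?sub0r ?subr0 ?oppr_eq0; tauto.
by move=> x y hx hy; rewrite !linev; apply: H.
Qed.
Lemma linE (a b : V) : lin (b i0) (b i1) (b i2) a = dotp a b.
Proof. by rewrite /lin dotE; ring. Qed.
Lemma coll_pair (X : {set V}) (b b' : V) : b' i0 != 0 ->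
  (forall t, b i0 = t * b' i0 -> b i1 = t * b' i1 -> b i2 = t * b' i2 -> False) ->
  (forall x y, x \in X -> y \in X -> dotp x b = dotp y b /\ dotp x b' = dotp y b') -> coll X.
Proof.
move=> hb' np H.
apply: (coll2 (n0 := b i0) (n1 := b i1) (n2 := b i2) (m0 := b' i0) (m1 := b' i1) (m2 := b' i2)).
  case: (eqVneq (b i1 * b' i2 - b i2 * b' i1) 0) => h0; last by left.
  case: (eqVneq (b i2 * b' i0 - b i0 * b' i2) 0) => h1; last by right; left.
  case: (eqVneq (b i0 * b' i1 - b i1 * b' i0) 0) => h2; last by right; right.
  exfalso.
  have [t [e0 e1 e2]] := par3 (subr0_eq h2) (subr0_eq h0) (esym (subr0_eq h1)) (or_introl hb').
  exact: np e0 e1 e2.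
by move=> x y hx hy; rewrite !linE; apply: H.
Qed.
Lemma collD (A : {set V}) (b b' : V) c a0 : a0 \in A -> c != 0 -> b != b' -> nzvec b' ->
  (forall a, a \in A -> dotp a b = c /\ dotp a b' = c) -> coll A.
Proof.
move=> ha0 c0 nbb nzb H; apply: (coll_pair (b := b) (b' := b')).
- exact: (forallP nzb i0).
- move=> t e0 e1 e2.
  have [d1 d2] := H a0 ha0.
  have E : dotp a0 b = t * dotp a0 b' by rewrite !dotE e0 e1 e2; ring.
  rewrite d1 d2 in E.
  have t1 : t = 1.
    apply/eqP; rewrite -subr_eq0; apply/eqP.
    have : (t - 1) * c = 0 by rewrite mulrBl -E mul1r subrr.
    by move/eqP; rewrite mulf_eq0 (negbTE c0) orbF => /eqP.
  by move: nbb; rewrite (vec_eq3 (x := b) (y := b')) ?eqxx // ?e0 ?e1 ?e2 t1 mul1r.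
- by move=> x y hx hy; have [-> ->] := H x hx; have [-> ->] := H y hy.
Qed.
Lemma coll_single (B : {set V}) (a : V) c (n0 n1 n2 : F) b0 : b0 \in B ->
  (n0 != 0 \/ n1 != 0 \/ n2 != 0) -> c != dotp a a ->
  (forall b, b \in B -> dotp b a = c /\ lin n0 n1 n2 b = lin n0 n1 n2 a) -> coll B.
Proof.
move=> hb0 nn ca H.
apply: (coll2 (n0 := n0) (n1 := n1) (n2 := n2) (m0 := a i0) (m1 := a i1) (m2 := a i2)).
  case: (eqVneq (n1 * a i2 - n2 * a i1) 0) => h0; last by left.
  case: (eqVneq (n2 * a i0 - n0 * a i2) 0) => h1; last by right; left.
  case: (eqVneq (n0 * a i1 - n1 * a i0) 0) => h2; last by right; right.
  exfalso.
  have q01 : a i0 * n1 = a i1 * n0.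
    apply/subr0_eq; have -> : a i0 * n1 - a i1 * n0 = - (n0 * a i1 - n1 * a i0) by ring.
    by rewrite h2 oppr0.
  have q12 : a i1 * n2 = a i2 * n1.
    apply/subr0_eq; have -> : a i1 * n2 - a i2 * n1 = - (n1 * a i2 - n2 * a i1) by ring.
    by rewrite h0 oppr0.
  have q02 : a i0 * n2 = a i2 * n0.
    apply/subr0_eq; have -> : a i0 * n2 - a i2 * n0 = (n2 * a i0 - n0 * a i2) by ring.
    by rewrite h1.
  have [t [e0 e1 e2]] := par3 q01 q12 q02 nn.
  have [d1 d2] := H b0 hb0.
  have E : dotp a a - dotp b0 a = t * (lin n0 n1 n2 a - lin n0 n1 n2 b0).
    rewrite !dotE /lin.
    have -> : a i0 * a i0 + a i1 * a i1 + a i2 * a i2 - (b0 i0 * a i0 + b0 i1 * a i1 + b0 i2 * a i2)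
      = (a i0 - b0 i0) * a i0 + (a i1 - b0 i1) * a i1 + (a i2 - b0 i2) * a i2 by ring.
    rewrite {2}e0 {2}e1 {2}e2; ring.
  move: E; rewrite d2 subrr mulr0 d1 => /eqP; rewrite subr_eq0 => /eqP e.
  by rewrite e eqxx in ca.
move=> x y hx hy; rewrite !linE; have [-> ->] := H x hx; have [-> ->] := H y hy; done.
Qed.
Lemma plane_j (n0 n1 n2 : F) (x y : V) i : (n0 != 0 \/ n1 != 0 \/ n2 != 0) ->
  lin n0 n1 n2 x = lin n0 n1 n2 y -> x i != y i -> exists j, j != i /\ wf n0 n1 n2 j != 0.
Proof.
move=> nn hl hxy; case: (ord3_cases i) => [ei|[ei|ei]]; rewrite ei in hxy *.
- case: (eqVneq n1 0) => h1; last by exists i1.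
  case: (eqVneq n2 0) => h2; last by exists i2.
  have n0nz : n0 != 0 by case: nn => [//|[]]; rewrite ?h1 ?h2 eqxx.
  by move: hl; rewrite /lin h1 h2 !mul0r !addr0 => /(mulfI n0nz) e; rewrite e eqxx in hxy.
- case: (eqVneq n0 0) => h0; last by exists i0.
  case: (eqVneq n2 0) => h2; last by exists i2.
  have n1nz : n1 != 0 by case: nn => [|[//|]]; rewrite ?h0 ?h2 eqxx.
  by move: hl; rewrite /lin h0 h2 !mul0r !addr0 !add0r => /(mulfI n1nz) e; rewrite e eqxx in hxy.
- case: (eqVneq n0 0) => h0; last by exists i0.
  case: (eqVneq n1 0) => h1; last by exists i1.
  have n2nz : n2 != 0 by case: nn => [|[|//]]; rewrite ?h0 ?h1 eqxx.
  by move: hl; rewrite /lin h0 h1 !mul0r !add0r => /(mulfI n2nz) e; rewrite e eqxx in hxy.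
Qed.
Lemma split_info (A B : {set V}) g a0 b0 : a0 \in A -> b0 \in B -> [disjoint A & B] ->
  (forall a b, a \in A -> b \in B -> phi lt a b = g) ->
  (exists c, c != 0 /\ forall a b, a \in A -> b \in B ->
      [/\ dotp a b = c, c != dotp a a & c != dotp b b])
  \/ (exists p : 'I_3 * F,
      (forall a b, a \in A -> b \in B -> first_diff_at a b p.1 /\ a p.1 + b p.1 = p.2) /\
      ((forall a a' b, a \in A -> a' \in A -> b \in B -> dotp a b = dotp a' b) \/
       (forall a b b', a \in A -> b \in B -> b' \in B -> dotp a b = dotp a b'))).
Proof.
move=> ha0 hb0 d cr.
have ne : forall a b, a \in A -> b \in B -> a != b by move=> a b; exact: neqAB d.
have LX : forall p : 'I_3 * F,
   (forall a b, a \in A -> b \in B -> first_diff_at a b p.1 /\ a p.1 + b p.1 = p.2) ->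
   forall a b, a \in A -> b \in B -> lexlt lt a b = lt (a0 p.1) (b0 p.1).
  move=> p FD a b ha hb; rewrite (lexltE (FD a b ha hb).1).
  have ea : a p.1 = a0 p.1.
    by apply: (addIr (b0 p.1)); rewrite (FD a b0 ha hb0).2 (FD a0 b0 ha0 hb0).2.
  have eb : b p.1 = b0 p.1.
    by apply: (addrI (a0 p.1)); rewrite (FD a0 b ha0 hb).2 (FD a0 b0 ha0 hb0).2.
  by rewrite ea eb.
case: g cr => [c|[p|[p|p]]] cr.
- left; exists c; have [_ c0 _ _] := phi_DOT (ne _ _ ha0 hb0) (cr _ _ ha0 hb0); split => // a b ha hb.
  by have [<- _ ca cb] := phi_DOT (ne _ _ ha hb) (cr _ _ ha hb).
- have FD : forall a b, a \in A -> b \in B -> first_diff_at a b p.1 /\ a p.1 + b p.1 = p.2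
    := fun a b ha hb => phi_nonDOT (ne _ _ ha hb) (or_introl (cr _ _ ha hb)).
  right; exists p; split => //; left => a a' b ha ha' hb.
  by rewrite (phi_ZERO (ne _ _ ha hb) (cr _ _ ha hb)) (phi_ZERO (ne _ _ ha' hb) (cr _ _ ha' hb)).
- have FD : forall a b, a \in A -> b \in B -> first_diff_at a b p.1 /\ a p.1 + b p.1 = p.2
    := fun a b ha hb => phi_nonDOT (ne _ _ ha hb) (or_intror (or_introl (cr _ _ ha hb))).
  right; exists p; split => //; case hl: (lt (a0 p.1) (b0 p.1)).
  + right => a b b' ha hb hb'.
    by rewrite (phi_UP (ne _ _ ha hb) (cr _ _ ha hb)) (phi_UP (ne _ _ ha hb') (cr _ _ ha hb'))
      !(LX p FD) // hl.
  + left => a a' b ha ha' hb.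
    by rewrite (phi_UP (ne _ _ ha hb) (cr _ _ ha hb)) (phi_UP (ne _ _ ha' hb) (cr _ _ ha' hb))
      !(LX p FD) // hl.
- have FD : forall a b, a \in A -> b \in B -> first_diff_at a b p.1 /\ a p.1 + b p.1 = p.2
    := fun a b ha hb => phi_nonDOT (ne _ _ ha hb) (or_intror (or_intror (cr _ _ ha hb))).
  right; exists p; split => //; case hl: (lt (a0 p.1) (b0 p.1)).
  + left => a a' b ha ha' hb.
    by rewrite (phi_DOWN (ne _ _ ha hb) (cr _ _ ha hb)) (phi_DOWN (ne _ _ ha' hb) (cr _ _ ha' hb))
      !(LX p FD) // hl.
  + right => a b b' ha hb hb'.
    by rewrite (phi_DOWN (ne _ _ ha hb) (cr _ _ ha hb)) (phi_DOWN (ne _ _ ha hb') (cr _ _ ha hb'))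
      !(LX p FD) // hl.
Qed.
Lemma L2 S : leftover lt S -> (forall x, x \in S -> nzvec x) -> cop S -> (#|S| <= 4)%N.
Proof.
case=> [S0 -> // | A B g nA nB dAB lA lB dphi cr gn] nz [n0 [n1 [n2 [nn cp]]]].
rewrite cardU_disj //.
have [a0 ha0] := set0Pn _ nA; have [b0 hb0] := set0Pn _ nB.
have nzA : forall x, x \in A -> nzvec x by move=> x h; apply: nz; exact: inUl.
have nzB : forall x, x \in B -> nzvec x by move=> x h; apply: nz; exact: inUr.
have cpAB : forall x y, x \in A :|: B -> y \in A :|: B -> lin n0 n1 n2 x = lin n0 n1 n2 y := cp.
suff [hA hB] : (#|A| <= 2)%N /\ (#|B| <= 2)%N by apply: (leq_add hA hB).
case: (split_info ha0 hb0 dAB cr) => [[c [c0 H]] | [p [FD _]]].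
- split.
  + apply: (L1 lA nzA); apply: (coll_single (a := b0) (c := c) ha0 nn).
      by have [_ _ ] := H a0 b0 ha0 hb0.
    move=> b hb; have [-> _ _] := H b b0 hb hb0; split => //.
    by apply: cpAB; [exact: inUl | exact: inUr].
  + apply: (L1 lB nzB); apply: (coll_single (a := a0) (c := c) hb0 nn).
      by have [_ ] := H a0 b0 ha0 hb0.
    move=> b hb; have [<- _ _] := H a0 b ha0 hb; split; first exact: dotC.
    by apply: cpAB; [exact: inUr | exact: inUl].
- have [f0 s0] := FD a0 b0 ha0 hb0.
  have [j hj] : exists j, j != p.1 /\ wf n0 n1 n2 j != 0.
    apply: (plane_j (x := a0) (y := b0)) => //; first by apply: cpAB; [exact: inUl | exact: inUr].
    by case/andP: f0.
  split.
  + apply: (L1 lA nzA); apply: (coll_nc (n0 := n0) (n1 := n1) (n2 := n2) (i := p.1)); first by exists j.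
    move=> x y hx hy; split; first by apply: cpAB; exact: inUl.
    by apply: (addIr (b0 p.1)); rewrite (FD x b0 hx hb0).2 (FD y b0 hy hb0).2.
  + apply: (L1 lB nzB); apply: (coll_nc (n0 := n0) (n1 := n1) (n2 := n2) (i := p.1)); first by exists j.
    move=> x y hx hy; split; first by apply: cpAB; exact: inUr.
    by apply: (addrI (a0 p.1)); rewrite (FD a0 x ha0 hx).2 (FD a0 y ha0 hy).2.
Qed.
Lemma T0 (X Y : {set V}) : leftover lt X -> leftover lt Y ->
  (forall x, x \in X -> nzvec x) -> (forall y, y \in Y -> nzvec y) ->
  (forall x x', x \in X -> x' \in X -> x i0 = x' i0) ->
  (forall y y', y \in Y -> y' \in Y -> y i0 = y' i0) ->
  (1 < #|X|)%N -> (1 < #|Y|)%N ->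
  (forall x x' y, x \in X -> x' \in X -> y \in Y -> dotp x y = dotp x' y) ->
  (#|X| <= 2)%N /\ (#|Y| <= 2)%N.
Proof.
move=> lX lY nzX nzY cX cY /card_gt1P [x [x' [hx hx' nxx]]] /card_gt1P [y [y' [hy hy' nyy]]] H.
split.
- apply: (L1 lX nzX); apply: (coll_pair (b := y) (b' := y')).
  + exact: (forallP (nzY _ hy') i0).
  + move=> t e0 e1 e2.
    have y0 : y' i0 != 0 := forallP (nzY _ hy') i0.
    have t1 : t = 1.
      apply: (mulIf y0); rewrite mul1r -e0; exact: cY.
    by move: nyy; rewrite (vec_eq3 (x := y) (y := y')) ?eqxx // ?e0 ?e1 ?e2 t1 mul1r.
  + by move=> u v hu hv; split; apply: H.
- apply: (L1 lY nzY).
  apply: (coll_nc (n0 := x i0 - x' i0) (n1 := x i1 - x' i1) (n2 := x i2 - x' i2) (i := i0)).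
  + have e0 : x i0 - x' i0 = 0 by rewrite (cX x x' hx hx') subrr.
    case: (eqVneq (x i1 - x' i1) 0) => h1; last by exists i1.
    case: (eqVneq (x i2 - x' i2) 0) => h2; last by exists i2.
    by move: nxx; rewrite (vec_eq3 (x := x) (y := x')) ?eqxx // ; apply/eqP; rewrite -subr_eq0; apply/eqP.
  + move=> u v hu hv; split; last exact: cY.
    have E : forall w, lin (x i0 - x' i0) (x i1 - x' i1) (x i2 - x' i2) w = dotp x w - dotp x' w
      by move=> w; rewrite /lin !dotE; ring.
    by rewrite !E (H x x' u) // (H x x' v) // !subrr.
Qed.
Lemma main (S : {set V}) : leftover lt S -> (forall x, x \in S -> nzvec x) -> (#|S| <= 5)%N.
Proof.
case=> [S0 -> // | A B g nA nB dAB lA lB dphi cr gn] nz.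
rewrite cardU_disj //.
have [a0 ha0] := set0Pn _ nA; have [b0 hb0] := set0Pn _ nB.
have nzA : forall x, x \in A -> nzvec x by move=> x h; apply: nz; exact: inUl.
have nzB : forall x, x \in B -> nzvec x by move=> x h; apply: nz; exact: inUr.
have n0a : a0 i0 != 0 := forallP (nzA _ ha0) i0.
have n0b : b0 i0 != 0 := forallP (nzB _ hb0) i0.
case: (split_info ha0 hb0 dAB cr) => [[c [c0 H]] | [p [FD rel]]].
- case: (leqP #|A| 1) => hA.
    have hB : (#|B| <= 4)%N.
      apply: (L2 lB nzB); exists (a0 i0), (a0 i1), (a0 i2); split; first by left.
      move=> x y hx hy; rewrite !linE (dotC x) (dotC y).
      by have [-> _ _] := H a0 x ha0 hx; have [-> _ _] := H a0 y ha0 hy.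
    by apply: (leq_add hA hB).
  case: (leqP #|B| 1) => hB.
    have hA' : (#|A| <= 4)%N.
      apply: (L2 lA nzA); exists (b0 i0), (b0 i1), (b0 i2); split; first by left.
      move=> x y hx hy; rewrite !linE.
      by have [-> _ _] := H x b0 hx hb0; have [-> _ _] := H y b0 hy hb0.
    by rewrite addnC; apply: (leq_add hB hA').
  suff [hA2 hB2] : (#|A| <= 2)%N /\ (#|B| <= 2)%N by apply: leq_trans (leq_add hA2 hB2) _.
  split.
  + apply: (L1 lA nzA).
    have [b [b' [hb hb' nbb]]] := card_gt1P hB.
    apply: (collD (b := b) (b' := b') (c := c) ha0 c0 nbb (nzB _ hb')).
    by move=> a ha; have [-> _ _] := H a b ha hb; have [-> _ _] := H a b' ha hb'.
  + apply: (L1 lB nzB).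
    have [a [a' [ha ha' naa]]] := card_gt1P hA.
    apply: (collD (b := a) (b' := a') (c := c) hb0 c0 naa (nzA _ ha')).
    by move=> b hb; rewrite !(dotC b); have [-> _ _] := H a b ha hb; have [-> _ _] := H a' b ha' hb.
- have [f0 s0] := FD a0 b0 ha0 hb0.
  have cA : forall x y, x \in A -> y \in A -> x p.1 = y p.1.
    by move=> x y hx hy; apply: (addIr (b0 p.1)); rewrite (FD x b0 hx hb0).2 (FD y b0 hy hb0).2.
  have cB : forall x y, x \in B -> y \in B -> x p.1 = y p.1.
    by move=> x y hx hy; apply: (addrI (a0 p.1)); rewrite (FD a0 x ha0 hx).2 (FD a0 y ha0 hy).2.
  case: (eqVneq p.1 i0) => hp.
  + have cA0 : forall x y, x \in A -> y \in A -> x i0 = y i0 by rewrite -hp.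
    have cB0 : forall x y, x \in B -> y \in B -> x i0 = y i0 by rewrite -hp.
    have e0nz : ev i0 i0 != 0 \/ ev i0 i1 != 0 \/ ev i0 i2 != 0 by left; rewrite /ev /= oner_neq0.
    have hA4 : (#|A| <= 4)%N.
      apply: (L2 lA nzA); exists (ev i0 i0), (ev i0 i1), (ev i0 i2); split => // x y hx hy.
      by rewrite !linev; apply: cA0.
    have hB4 : (#|B| <= 4)%N.
      apply: (L2 lB nzB); exists (ev i0 i0), (ev i0 i1), (ev i0 i2); split => // x y hx hy.
      by rewrite !linev; apply: cB0.
    case: (leqP #|A| 1) => hA; first by apply: (leq_add hA hB4).
    case: (leqP #|B| 1) => hB; first by rewrite addnC; apply: (leq_add hB hA4).
    suff [hA2 hB2] : (#|A| <= 2)%N /\ (#|B| <= 2)%N by apply: leq_trans (leq_add hA2 hB2) _.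
    case: rel => R.
    * exact: T0 lA lB nzA nzB cA0 cB0 hA hB R.
    * have [h1 h2] : (#|B| <= 2)%N /\ (#|A| <= 2)%N.
        apply: T0 lB lA nzB nzA cB0 cA0 hB hA _ => x x' y hx hx' hy.
        by rewrite !(dotC _ y); apply: R.
      by split.
  + have c0 : forall x y, x \in A :|: B -> y \in A :|: B -> x i0 = y i0.
      have lt0 : (i0 < p.1)%N by rewrite ltn_neqAle eq_sym hp /=.
      have E : forall a b, a \in A -> b \in B -> a i0 = b i0.
        move=> a b ha hb; have [/andP[_ /forallP fa] _] := FD a b ha hb.
        by apply/eqP; exact: (implyP (fa i0) lt0).
      move=> x y; rewrite !in_setU => /orP[hx|hx] /orP[hy|hy].
      * by rewrite (E x b0) // (E y b0).
      * exact: E.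
      * by rewrite (E y x).
      * by rewrite -(E a0 x) // -(E a0 y).
    have jj : exists j, j != p.1 /\ wf (ev i0 i0) (ev i0 i1) (ev i0 i2) j != 0.
      by exists i0; rewrite eq_sym hp /wf /ev /= oner_neq0.
    suff [hA2 hB2] : (#|A| <= 2)%N /\ (#|B| <= 2)%N by apply: leq_trans (leq_add hA2 hB2) _.
    split.
    * apply: (L1 lA nzA); apply: (coll_nc (i := p.1) jj) => x y hx hy.
      by rewrite !linev; split; [apply: c0; exact: inUl | exact: cA].
    * apply: (L1 lB nzB); apply: (coll_nc (i := p.1) jj) => x y hx hy.
      by rewrite !linev; split; [apply: c0; exact: inUr | exact: cB].
Qed.
End S.
Local Close Scope ring_scope.
Unset Implicit Arguments.

Theorem corollary3p12 (F : finFieldType) (lt : rel F) :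
  odd #|F| ->
  linear_order_on_units lt ->
  forall S : {set vec F 3},
    (forall x, x \in S -> nzvec x) ->
    #|S| = 6 ->
    ~ leftover lt S.
Proof.
move=> _ hl S nz h6 lS; have := main hl lS nz; by rewrite h6.
Qed.
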